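(* Let $B_1,\dots,B_N$ be the biconnected components of $G$. Then Condition 1 holds if and only if for each $n=1,\dots,N$ there exists an individual $v_n\in V$ who evaluates all alternatives of $B_n$, i.e. $A(B_n)\subseteq A_{v_n}$ (equivalently, $B_n\subseteq G_{v_n}$).
   Context: Let $A$ be a finite set of alternatives and $V$ a finite set of individuals, with $|A|\ge 3$ and $|V|\ge 3$. For each $v\in V$, let $A_v\subseteq A$ be the set of alternatives that $v$ evaluates, with $|A_v|\ge 2$. A graph is identified with its edge set, a set of unordered pairs $ab=\{a,b\}$ of distinct alternatives; a subgraph is a subset of the edge set. For a subgraph $H$, $A(H)$ denotes the set of alternatives appearing in some edge of $H$. Define $G_v=\{ab : a,b\in A_v,\ a\neq b\}$ and $G=\{ab: a,b\in A_v \text{ for some } v\in V,\ a\ne b\}$. A path in $G$ is a set $\{a_1a_2,a_2a_3,\dots,a_{M-1}a_M\}\subseteq G$ with $a_1,\dots,a_M$ distinct; a cycle in $G$ is a set $\{a_1a_2,\dots,a_{M-1}a_M,a_Ma_1\}\subseteq G$ with $a_1,\dots,a_M$ distinct and $M\ge 3$. A nonempty subgraph $H$ is connected if any two vertices of $A(H)$ are joined by a path in $H$. A vertex $a\in A(H)$ is an articulation vertex of $H$ if there are distinct $b,c\in A(H)\setminus\{a\}$ such that every path in $H$ from $b$ to $c$ contains $a$. A subgraph $B\subseteq G$ is biconnected if it consists of a single edge or is connected and has no articulation vertex; a biconnected component of $G$ is a nonempty maximal (under inclusion) biconnected subgraph of $G$ (isolated vertices are not components). Condition 1: for every cycle $C$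 of $G$ there exists $v\in V$ such that $A(C)\subseteq A_v$. *)

(* Defs.v *)
From mathcomp Require Import all_boot.
Set Implicit Arguments. Unset Strict Implicit. Unset Printing Implicit Defensive.

Section Graphs.
Variable A : finType.

(* An edge ab = {a,b} is a two-element subset of A; a graph is a set of edges. *)
Definition is_edge (e : {set A}) : bool := #|e| == 2.

Definition verts (H : {set {set A}}) : {set A} := \bigcup_(e in H) e.

Definition adj (H : {set {set A}}) : rel A := fun x y => [set x; y] \in H.

(* b :: s is a path in H from b to c: distinct vertices, consecutive
   vertices joined by an edge of H, ending at c. Its vertex set is b :: s. *)
Definition path_in (H : {set {set A}}) (b c : A) (s : seq A) : bool :=
  [&& path (adj H) b s, uniq (b :: s) & last b s == c].

(* s = [:: a_1; ...; a_M] is a cycle of H: M >= 3, distinct vertices,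
   a_i a_(i+1) in H and a_M a_1 in H. Its vertex set A(C) is [set x in s]. *)
Definition cycle_in (H : {set {set A}}) (s : seq A) : bool :=
  [&& 2 < size s, uniq s & cycle (adj H) s].

Definition connected (H : {set {set A}}) : Prop :=
  H != set0 /\
  forall b c, b \in verts H -> c \in verts H -> exists s, path_in H b c s.

Definition articulation (H : {set {set A}}) (a : A) : Prop :=
  a \in verts H /\
  exists b c, [/\ b \in verts H :\ a, c \in verts H :\ a, b != c &
    forall s, path_in H b c s -> a \in b :: s].

Definition biconnected (B : {set {set A}}) : Prop :=
  #|B| = 1 \/ (connected B /\ forall a, ~ articulation B a).

Definition bicomponent (G B : {set {set A}}) : Prop :=
  [/\ B != set0, B \subset G, biconnected B &
    forall B' : {set {set A}}, B \subset B' -> B' \subset G -> biconnected B' -> B' = B].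

End Graphs.

Section Model.
Variables (A V : finType) (Av : V -> {set A}).

Definition Gv (v : V) : {set {set A}} :=
  [set e : {set A} | is_edge e && (e \subset Av v)].

Definition Gall : {set {set A}} := \bigcup_(v : V) Gv v.

Definition condition1 : Prop :=
  forall s : seq A, cycle_in Gall s -> exists v : V, [set x in s] \subset Av v.

End Model.

(* Main.v *)
Require Import Defs.
From mathcomp Require Import all_boot.
From Stdlib Require Import Classical Lia.
From mathcomp Require Import zify.
Set Implicit Arguments. Unset Strict Implicit. Unset Printing Implicit Defensive.

Section G.
Variable A : finType.
Implicit Types (H : {set {set A}}).

Lemma adj_sym H x y : adj H x y = adj H y x.
Proof. by rewrite /adj setUC. Qed.

Lemma path_in_mono H H' b c s : H \subset H' -> path_in H b c s -> path_in H' b c s.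
Proof.
move=> sH /and3P[p u l]; apply/and3P; split=> //.
by apply: sub_path p => x y; rewrite /adj => /(subsetP sH).
Qed.

Lemma walk_lem (e : rel A) (esym : symmetric e) x l b c :
  path e x l -> b \in x :: l -> c \in x :: l ->
  exists w, [/\ path e b w, last b w = c & {subset b :: w <= x :: l}].
Proof.
elim: l x b c => [|y l IH] x b c.
  by move=> _; rewrite !inE => /eqP -> /eqP ->; exists [::]; split.
rewrite /= => /andP[exy pyl].
rewrite [b \in _]in_cons [c \in _]in_cons.
have sub1 : {subset y :: l <= x :: y :: l} by move=> z zi; rewrite inE zi orbT.
case/orP=> [/eqP-> | hb]; case/orP=> [/eqP-> | hc].
- by exists [::]; split=> // z; rewrite inE => /eqP ->; rewrite inE eqxx.
- have [w [pw lw sw]] := IH y y c pyl (mem_head _ _) hc.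
  exists (y :: w); split=> //=; first by rewrite exy.
  move=> z; rewrite inE => /orP[/eqP ->|zi]; first by rewrite inE eqxx.
  exact: sub1 (sw z zi).
- have [w [pw lw sw]] := IH y b y pyl hb (mem_head _ _).
  exists (rcons w x); split; first by rewrite rcons_path pw lw esym.
    by rewrite last_rcons.
  move=> z; rewrite -rcons_cons mem_rcons inE => /orP[/eqP ->|zi]; first by rewrite inE eqxx.
  exact: sub1 (sw z zi).
- have [w [pw lw sw]] := IH y b c pyl hb hc.
  by exists w; split=> // z /sw /sub1.
Qed.

Lemma walk_to_path H b c w (P : pred A) :
  path (adj H) b w -> last b w = c -> {subset b :: w <= P} ->
  exists s, path_in H b c s /\ {subset b :: s <= P}.
Proof.
move=> pw <- sw; case: (shortenP pw) => p' pp up sp.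
exists p'; split; first by rewrite /path_in pp up eqxx.
move=> z; rewrite inE => /orP[/eqP ->|zi]; first by apply: sw; rewrite inE eqxx.
by apply: sw; rewrite inE sp ?orbT.
Qed.

End G.
Section C.
Variable A : finType.
Implicit Types (H : {set {set A}}).

Lemma cycle_bicon (G : {set {set A}}) (s : seq A) : cycle_in G s ->
  [/\ [set [set x; next s x] | x in s] \subset G,
      verts [set [set x; next s x] | x in s] = [set x in s] &
      biconnected [set [set x; next s x] | x in s]].
Proof.
case/and3P=> ss us cs.
set C := [set [set x; next s x] | x in s].
have adjC x : x \in s -> adj C x (next s x) by move=> xs; rewrite /adj; apply: imset_f.
have cC : cycle (adj C) s by apply: cycle_from_next.
have vC : verts C = [set x in s].
  apply/setP => y; rewrite inE; apply/bigcupP/idP.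
    case=> e /imsetP[x xs ->]; rewrite !inE => /orP[/eqP->|/eqP->] //.
    by rewrite mem_next.
  by move=> ys; exists [set y; next s y]; [apply: imset_f | rewrite !inE eqxx].
split=> //.
  apply/subsetP => e /imsetP[x xs ->]; exact: (next_cycle cs xs).
right; split.
  split.
    have [x xs] : exists x, x \in s.
      by move: ss; case: (s) => [//|x l] _; exists x; rewrite mem_head.
    by apply/set0Pn; exists [set x; next s x]; apply: imset_f.
  move=> b c; rewrite vC !inE => bs cs'.
  case: (rot_to bs) => i t rt.
  have ct : cycle (adj C) (b :: t) by rewrite -rt rot_cycle.
  have pl : path (adj C) b t by move: ct; rewrite /= rcons_path => /andP[].
  have cbt : c \in b :: t by rewrite -rt mem_rot.
  have [w [pw lw sw]] := walk_lem (@adj_sym _ _) pl (mem_head _ _) cbt.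
  by have [s' [ps _]] := walk_to_path (P := predT) pw lw (fun _ _ => isT); exists s'.
move=> a [av [b [c [bv cv bc hall]]]].
move: av bv cv; rewrite vC !inE => as_ /andP[ba bs] /andP[ca cs'].
case: (rot_to as_) => i t rt.
have ct : cycle (adj C) (a :: t) by rewrite -rt rot_cycle.
have ut : uniq (a :: t) by rewrite -rt rot_uniq.
have bt : b \in t by move: (mem_rot i s b); rewrite rt bs in_cons (negbTE ba).
have ct' : c \in t by move: (mem_rot i s c); rewrite rt cs' in_cons (negbTE ca).
case: t ct ut bt ct' {rt} => [//|h t'] ct ut bt ct'.
have ph : path (adj C) h t'.
  by move: ct; rewrite /= rcons_path => /and3P[].
have [w [pw lw sw]] := walk_lem (@adj_sym _ _) ph bt ct'.
have [s' [ps ss']] := walk_to_path (P := mem (h :: t')) pw lw sw.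
have := hall s' ps => /ss'.
by move: ut => /= /andP[/negP].
Qed.

End C.
Section E.
Variable A : finType.
Implicit Types (H : {set {set A}}).

Lemma exists_bicomp (G B0 : {set {set A}}) : B0 != set0 -> B0 \subset G -> biconnected B0 ->
  exists B, bicomponent G B /\ B0 \subset B.
Proof.
move=> n0 s0 b0.
suff: forall n (B : {set {set A}}), B0 \subset B -> B \subset G -> biconnected B -> #|G| - #|B| < n ->
  exists B', bicomponent G B' /\ B0 \subset B'.
  by move=> /(_ (#|G| - #|B0|).+1 B0 (subxx _) s0 b0 (ltnSn _)).
elim=> [//|n IH] B sB sG bB hn.
case: (classic (forall B' : {set {set A}}, B \subset B' -> B' \subset G -> biconnected B' -> B' = B)) => [hm|].
  exists B; split=> //; split=> //.
  case/set0Pn: n0 => e he; apply/set0Pn; exists e; exact: (subsetP sB).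
move=> hnm; have [B' hB'] := not_all_ex_not _ _ hnm.
have [sBB' h1] := imply_to_and _ _ hB'.
have [sB'G h2] := imply_to_and _ _ h1.
have [bB' neq] := imply_to_and _ _ h2.
have pr : B \proper B' by rewrite properEneq sBB' andbT eq_sym; apply/eqP.
apply: (IH B') => //; first exact: subset_trans sB sBB'.
have := proper_card pr; have := subset_leq_card sB'G; have := subset_leq_card sG.
move: hn; clear; lia.
Qed.

Lemma pathD (r : rel A) (l : seq A) x : uniq (x :: l) ->
  (forall y z, y \in x :: l -> z \in x :: l -> y != z -> r y z) -> path r x l.
Proof.
elim: l x => [//|y l IH] x /= /andP[xn /andP[yn ul]] hr.
apply/andP; split.
  apply: hr; rewrite ?mem_head ?in_cons ?eqxx ?orbT //.
  by apply/eqP=> exy; move: xn; rewrite exy mem_head.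
apply: IH; first by rewrite /= yn ul.
by move=> a b ha hb; apply: hr; rewrite in_cons ?ha ?hb orbT.
Qed.

Lemma cycle_clique (r : rel A) (p : seq A) : uniq p -> 1 < size p ->
  (forall y z, y \in p -> z \in p -> y != z -> r y z) -> cycle r p.
Proof.
case: p => [//|x [//|y l]] up _ hr.
change (path r x (rcons (y :: l) x)); rewrite rcons_path (pathD up hr) /=.
have lm : last y l \in y :: l by exact: mem_last.
apply: hr; first by rewrite in_cons lm orbT.
  exact: mem_head.
apply/eqP=> e; move: up => /= /andP[/negP xn _]; apply: xn; rewrite -e; exact: lm.
Qed.

End E.
Section M.
Variables (A V : finType) (Av : V -> {set A}).

Lemma Gall_edge e : e \in Gall Av -> exists v, #|e| = 2 /\ e \subset Av v.
Proof.
by case/bigcupP=> v _; rewrite inE /is_edge => /andP[/eqP h s]; exists v.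
Qed.

Lemma adj_neq (B : {set {set A}}) x y : B \subset Gall Av -> adj B x y -> x != y.
Proof.
move=> sB /(subsetP sB) /Gall_edge[v [c _]]; apply/eqP=> e; move: c.
by rewrite e setUid cards1.
Qed.

Lemma adj_verts (B : {set {set A}}) x y : adj B x y -> x \in verts B /\ y \in verts B.
Proof.
by move=> h; split; apply/bigcupP; exists [set x; y]; rewrite // ?set21 ?set22.
Qed.

Lemma add_edge_bicon (B : {set {set A}}) x w :
  (connected B /\ forall a, ~ articulation B a) -> x \in verts B -> w \in verts B ->
  biconnected ([set [set x; w]] :|: B).
Proof.
move=> [[n0 cB] nart] xv wv.
have vB : verts ([set [set x; w]] :|: B) = verts B.
  rewrite /verts bigcup_setU big_set1; apply/setUidPr.
  by apply/subsetP=> y; rewrite !inE => /orP[]/eqP->.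
have sB : B \subset [set [set x; w]] :|: B by apply: subsetUr.
right; split.
  split; first by apply/set0Pn; exists [set x; w]; rewrite !inE eqxx.
  rewrite vB => b c bv cv; have [s ps] := cB b c bv cv.
  by exists s; apply: path_in_mono ps.
move=> a [av [b [c [bv cv bc hp]]]]; apply: (nart a); rewrite vB in av bv cv.
split=> //; exists b, c; split=> // s ps; apply: hp; exact: path_in_mono ps.
Qed.

Lemma closure (B : {set {set A}}) x z w : condition1 Av -> bicomponent (Gall Av) B ->
  (connected B /\ forall a, ~ articulation B a) ->
  adj B x z -> adj B z w -> x != w -> adj B x w.
Proof.
move=> c1 [n0 sB _ hmax] hbi hxz hzw xw.
have [xv zv] := adj_verts hxz; have [_ wv] := adj_verts hzw.
have xz := adj_neq sB hxz; have zw := adj_neq sB hzw.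
have [s [ps zn]] : exists s, path_in B x w s /\ z \notin x :: s.
  apply: NNPP => hn; apply: (hbi.2 z); split=> //; exists x, w; split=> //;
    [by rewrite !inE xv andbT | by rewrite !inE wv andbT eq_sym |].
  move=> s ps; apply: contraT => hz; exfalso; apply: hn; exists s; split=> //.
have sadj : subrel (adj B) (adj (Gall Av)) by move=> a b; rewrite /adj => /(subsetP sB).
case/and3P: ps => pth us /eqP ls.
have sn : s != [::] by apply: contraNneq xw => se; rewrite -ls se.
have cyc : cycle_in (Gall Av) (z :: x :: s).
  apply/and3P; split.
  - by rewrite /= !ltnS lt0n size_eq0.
  - by rewrite cons_uniq zn us.
  change (path (adj (Gall Av)) z (rcons (x :: s) z)); rewrite rcons_path /=.
  rewrite sadj ?(sub_path sadj pth) //=; last by rewrite adj_sym.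
  by rewrite ls sadj // adj_sym.
have [v hv] := c1 _ cyc.
have ein : [set x; w] \in Gall Av.
  apply/bigcupP; exists v => //; rewrite inE /is_edge cards2 xw /=.
  rewrite subUset !sub1set; apply/andP; split; apply: (subsetP hv); rewrite inE.
    by rewrite in_cons mem_head orbT.
  by rewrite -ls in_cons mem_last orbT.
have := hmax ([set [set x; w]] :|: B) (subsetUr _ _).
rewrite subUset sub1set ein sB => /(_ isT (add_edge_bicon hbi xv wv)) e.
by rewrite /adj -e !inE eqxx.
Qed.

End M.
Section M2.
Variables (A V : finType) (Av : V -> {set A}).

Lemma clique (B : {set {set A}}) x y : condition1 Av -> bicomponent (Gall Av) B ->
  (connected B /\ forall a, ~ articulation B a) ->
  x \in verts B -> y \in verts B -> x != y -> adj B x y.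
Proof.
move=> c1 bc hbi xv yv xy.
have [s /and3P[ps us /eqP ls]] := hbi.1.2 x y xv yv.
have key : forall s z, adj B x z -> path (adj B) z s -> x \notin s -> adj B x (last z s).
  elim=> [//|w s' IH] z hxz /= /andP[hzw ps'].
  rewrite in_cons => /norP[xw xs]; apply: IH => //; exact: closure c1 bc hbi hxz hzw xw.
case: s ps us ls => [|w s'] /=; first by move=> _ _ e; move: xy; rewrite e eqxx.
move=> /andP[hxw ps'] /andP[]; rewrite in_cons => /norP[_ xs] _ <-.
exact: key.
Qed.

Lemma dir1 : condition1 Av -> forall B : {set {set A}}, bicomponent (Gall Av) B ->
     exists v : V, verts B \subset Av v.
Proof.
move=> c1 B bc; have [n0 sB bB _] := bc.
case: bB => [/eqP/cards1P[e Be] | hbi].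
  rewrite Be in sB *.
  have [v [_ se]] : exists v, #|e| = 2 /\ e \subset Av v.
    by apply: Gall_edge; apply: (subsetP sB); rewrite inE.
  by exists v; rewrite /verts big_set1.
case/set0Pn: n0 => e eB.
have [v [ce se]] := Gall_edge (subsetP sB e eB).
have seK : e \subset verts B by apply: (bigcup_sup e eB).
case: (boolP (verts B \subset e)) => [h | /subsetPn[w wK we]].
  by exists v; apply: subset_trans h se.
have sz : 2 < #|verts B|.
  by rewrite -ce; apply: proper_card; apply/properP; split=> //; exists w.
have cyc : cycle_in (Gall Av) (enum (verts B)).
  apply/and3P; split; first by rewrite -cardE.
    exact: enum_uniq.
  apply: cycle_clique; first exact: enum_uniq.
    by rewrite -cardE; apply: ltnW.
  move=> a b; rewrite !mem_enum => av bv ab.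
  exact: (subsetP sB) (clique c1 bc hbi av bv ab).
have [u hu] := c1 _ cyc; exists u.
by apply: subset_trans hu; apply/subsetP=> a av; rewrite inE mem_enum.
Qed.

Lemma dir2 : (forall B : {set {set A}}, bicomponent (Gall Av) B ->
     exists v : V, verts B \subset Av v) -> condition1 Av.
Proof.
move=> h s cs; have [sC vC bC] := cycle_bicon cs.
set C := [set [set x; next s x] | x in s] in sC vC bC.
have n0 : C != set0.
  case/and3P: cs => ss _ _.
  have [x xs] : exists x, x \in s.
    by move: ss; case: (s) => [//|x l] _; exists x; rewrite mem_head.
  by apply/set0Pn; exists [set x; next s x]; apply: imset_f.
have [B [bc sCB]] := exists_bicomp n0 sC bC.
have [v hv] := h B bc; exists v; rewrite -vC; apply: subset_trans hv.
apply/subsetP=> a /bigcupP[e eC ae]; apply/bigcupP; exists e => //.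
exact: (subsetP sCB).
Qed.

End M2.

Theorem proposition1 (A V : finType) (Av : V -> {set A})
  (hA : 3 <= #|A|) (hV : 3 <= #|V|) (hAv : forall v, 2 <= #|Av v|) :
  condition1 Av <->
  (forall B : {set {set A}}, bicomponent (Gall Av) B ->
     exists v : V, verts B \subset Av v).
Proof. by split; [apply: dir1 | apply: dir2]. Qed.
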